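(* Let $\mathcal X$ be the ternary coalescent started from a finite configuration $\mathbf r=(r_1,\dots,r_N)\in\mathcal S^\downarrow$ with $N=2n+1$, $n\in\mathbb Z_+$, and total mass $M=r_1+\dots+r_N$. Let $T_0=0$, $T_k$ the time of the $k$-th coagulation ($1\le k\le n$), and $\mathcal X'_k=\mathcal X(T_k)$, $0\le k\le n$. Then: (i) The waiting times $\Delta_k=T_k-T_{k-1}$, $k=1,\dots,n$, are independent exponential random variables with respective parameters $\alpha(k)=\frac12(M+N+2-2k)(N+1-2k)(N-2k)$. In particular, the sequences $(T_k)_{0\le k\le n}$ and $(\mathcal X'_k)_{0\le k\le n}$ are independent. (ii) $(\mathcal X'_k)_{0\le k\le n}$ is a Markov chain with transition probabilities $$\mathbb P\big(\mathcal X'_{l+1}=\mathbf s^{i\oplus j\oplus k}\mid \mathcal X'_l=\mathbf s\big)=\frac{s_i+s_j+s_k+3}{\alpha(l+1)},$$ for $0\le l<n$, $1\le i<j<k\le N-2l$, and every $\mathbf s=(s_1,\dots,s_{N-2l})\in\mathcal S^\downarrow$ with $s_1+\dots+s_{N-2l}=M$ and $\mathbb P(\mathcal X'_l=\mathbf s)>0$.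
   Context: $\mathcal S^\downarrow$ is the set of nonincreasing sequences $s_1\ge s_2\ge\dots\ge 0$ with finitely many nonzero terms, identified with their nonzero entries (particles). For indices $i<j<k$ of nonzero entries, $\mathbf s^{i\oplus j\oplus k}$ is obtained by removing $s_i,s_j,s_k$, inserting $s_i+s_j+s_k$ and reranking decreasingly. The ternary coalescent is the continuous-time Markov jump process on $\mathcal S^\downarrow$ with jump rates $q(\mathbf s,\cdot)=\sum_{1\le i<j<k,\ s_k>0}(s_i+s_j+s_k+3)\delta_{\mathbf s^{i\oplus j\oplus k}}$. *)

(* Defs.v *)
From HB Require Import structures.
From mathcomp Require Import all_boot all_order all_algebra.
From mathcomp Require Import all_classical all_reals all_analysis.
From mathcomp Require Import exponential_distribution.

Set Implicit Arguments.
Unset Strict Implicit.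
Unset Printing Implicit Defensive.

Import Order.TTheory GRing.Theory Num.Theory.

Local Open Scope classical_set_scope.
Local Open Scope ring_scope.

Section ternary.
Variable R : realType.

(* A configuration in S^downarrow, identified with its list of nonzero
   entries (particles): a nonincreasing finite list of positive reals. *)
Definition config (s : seq R) : bool :=
  sorted (fun x y : R => y <= x) s && all (fun x : R => 0 < x) s.

(* s^{i (+) j (+) k}: remove the entries of (0-based) indices i, j, k,
   insert s_i + s_j + s_k and rerank decreasingly. *)
Definition merge3 (s : seq R) (i j k : nat) : seq R :=
  sort (fun x y : R => y <= x)
    ((s`_i + s`_j + s`_k)
       :: [seq s`_l | l <- iota 0 (size s) & l \notin [:: i; j; k]]).

Definition triple_ok (s : seq R) (i j k : nat) : bool :=
  [&& (i < j)%N, (j < k)%N, (k < size s)%N & 0 < s`_k].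

Definition rate3 (s : seq R) (i j k : nat) : R := s`_i + s`_j + s`_k + 3.

Definition qrate (s s' : seq R) : R :=
  \sum_(i < size s) \sum_(j < size s) \sum_(k < size s |
      triple_ok s i j k && (merge3 s i j k == s')) rate3 s i j k.

Definition qtot (s : seq R) : R :=
  \sum_(i < size s) \sum_(j < size s) \sum_(k < size s | triple_ok s i j k)
     rate3 s i j k.

(* transition matrix of the jump chain: q(s,s')/q(s), and s is absorbing
   when q(s) = 0 *)
Definition jumpP (s s' : seq R) : R :=
  if qtot s == 0 then (s' == s)%:R else qrate s s' / qtot s.

Variables (d : measure_display) (Omega : measurableType d)
  (P : probability Omega R).

Definition Pr (A : set Omega) : R := fine (P A).

Definition hist (Y : nat -> Omega -> seq R) (k : nat) (h : nat -> seq R)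
  : set Omega := [set w | forall m, (m <= k)%N -> Y m w = h m].

(* Continuous-time Markov jump process with jump rates q, started at r,
   described (Norris, Markov Chains, Sect. 2.6) through its jump chain
   Y k (the state after the k-th jump) and its holding times D k
   (the time spent in state Y k, i.e. T_{k+1} - T_k):
   - Y is a discrete-time Markov chain started at r with transition
     matrix jumpP;
   - conditionally on Y_0, ..., Y_k, the holding times D_0, ..., D_k are
     independent exponential random variables with parameters
     q(Y_0), ..., q(Y_k) (stated for non-absorbing states, q > 0; in an
     absorbing state the holding time is infinite). *)
Definition ternary_coalescent (r : seq R) (Y : nat -> Omega -> seq R)
    (D : nat -> Omega -> R) : Prop :=
  [/\ (forall k s, measurable [set w | Y k w = s]),
      (forall k, measurable_fun [set: Omega] (D k)),
      Pr [set w | Y 0 w = r] = 1,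
      (forall k (h : nat -> seq R) (s' : seq R),
          Pr (hist Y k h `&` [set w | Y k.+1 w = s'])
          = Pr (hist Y k h) * jumpP (h k) s') &
      (forall k (h : nat -> seq R) (B : nat -> set R),
          (forall m, (m <= k)%N -> 0 < qtot (h m)) ->
          (forall m, measurable (B m)) ->
          Pr (hist Y k h `&` [set w | forall m, (m <= k)%N -> B m (D m w)])
          = Pr (hist Y k h) *
            \prod_(m < k.+1) fine (exponential_prob (qtot (h m)) (B m)))].

(* T_k = time of the k-th coagulation = D_0 + ... + D_{k-1} *)
Definition jump_time (D : nat -> Omega -> R) (k : nat) (w : Omega) : R :=
  \sum_(m < k) D m w.

End ternary.

Definition alpha {R : realType} (M : R) (N k : nat) : R :=
  (M + N%:R + 2 - 2 * k%:R) * (N%:R + 1 - 2 * k%:R) * (N%:R - 2 * k%:R) / 2.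

(* Main.v *)
Require Import Defs.
From HB Require Import structures.
From mathcomp Require Import all_boot all_order all_algebra.
From mathcomp Require Import all_classical all_reals all_analysis.
From mathcomp Require Import exponential_distribution.
From mathcomp Require Import measurable_realfun.
From mathcomp Require Import ring lra zify.
Import Order.TTheory GRing.Theory Num.Theory.
Local Open Scope classical_set_scope.
Local Open Scope ring_scope.
Set Implicit Arguments.
Unset Strict Implicit.
Unset Printing Implicit Defensive.
Section Basics.
Variables (R : realType) (d : measure_display) (Omega : measurableType d)
  (P : probability Omega R).

Lemma PrE A : measurable A -> P A = (Pr P A)%:E.
Proof. by move=> mA; rewrite /Pr fineK // fin_num_measure. Qed.

Lemma Pr_ge0 A : 0 <= Pr P A.
Proof. exact/fine_ge0/measure_ge0. Qed.

Lemma PrT : Pr P setT = 1.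
Proof. by rewrite /Pr probability_setT. Qed.

Lemma Pr0 : Pr P set0 = 0.
Proof. by rewrite /Pr measure0. Qed.

Lemma Pr_split A B : measurable A -> measurable B ->
  Pr P A = Pr P (A `\` B) + Pr P (A `&` B).
Proof.
move=> mA mB; apply: EFin_inj; rewrite EFinD -!PrE //.
- exact: measureDI.
- exact: measurableI.
- exact: measurableD.
Qed.

Lemma Pr_le A B : measurable A -> measurable B -> A `<=` B -> Pr P A <= Pr P B.
Proof.
move=> mA mB AB; rewrite -lee_fin -(PrE mA) -(PrE mB); by apply: le_measure => //; rewrite inE.
Qed.

Lemma Pr_le1 A : measurable A -> Pr P A <= 1.
Proof. by move=> mA; rewrite -PrT; apply: Pr_le => //. Qed.

End Basics.
Section Generic.
Variables (R : realType) (d' : measure_display) (T : measurableType d').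

Lemma meas_all_le (f : nat -> T -> R) (B : nat -> set R) K :
  (forall k, (k <= K)%N -> measurable_fun setT (f k)) ->
  (forall k, measurable (B k)) ->
  measurable [set w | forall k, (k <= K)%N -> B k (f k w)].
Proof.
move=> mf mB; elim: K mf => [|K IH] mf.
  have -> : [set w | forall k, (k <= 0)%N -> B k (f k w)] = setT `&` f 0%N @^-1` B 0%N.
    apply/seteqP; split => w /=.
      by move=> H; split=> //; apply: H.
    by move=> [_ H] k; rewrite leqn0 => /eqP ->.
  exact: mf.
have -> : [set w | forall k, (k <= K.+1)%N -> B k (f k w)] =
  [set w | forall k, (k <= K)%N -> B k (f k w)] `&` (setT `&` f K.+1 @^-1` B K.+1).
  apply/seteqP; split => w /=.
    by move=> H; split; [move=> k kK; apply: H; exact: leqW|split=> //; apply: H].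
  move=> [H1 [_ H2]] k; rewrite leq_eqVlt => /orP[/eqP->//|]; rewrite ltnS; exact: H1.
apply: measurableI; first by apply: IH => k kK; apply: mf; exact: leqW.
exact: mf.
Qed.

Lemma meas_eq_all_le (Y : nat -> T -> seq R) (h : nat -> seq R) K :
  (forall k s, measurable [set w | Y k w = s]) ->
  measurable [set w | forall k, (k <= K)%N -> Y k w = h k].
Proof.
move=> mY; elim: K => [|K IH].
  have -> : [set w | forall k, (k <= 0)%N -> Y k w = h k] = [set w | Y 0%N w = h 0%N].
    apply/seteqP; split => w /=; first by apply.
    by move=> H k; rewrite leqn0 => /eqP ->.
  exact: mY.
have -> : [set w | forall k, (k <= K.+1)%N -> Y k w = h k] =
  [set w | forall k, (k <= K)%N -> Y k w = h k] `&` [set w | Y K.+1 w = h K.+1].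
  apply/seteqP; split => w /=.
    by move=> H; split; [move=> k kK; apply: H; exact: leqW|apply: H].
  move=> [H1 H2] k; rewrite leq_eqVlt => /orP[/eqP->//|]; rewrite ltnS; exact: H1.
exact: measurableI.
Qed.

End Generic.

Lemma sum_pick (R : realType) (U : eqType) (s : seq U) x (c : R) :
  uniq s -> x \in s -> \sum_(y <- s) (if x == y then c else 0) = c.
Proof.
move=> us xs; rewrite (big_rem x) //= eqxx big1_seq ?addr0 // => y /andP[_ yr].
move: yr; rewrite mem_rem_uniq //= => /andP[yx _].
by rewrite eq_sym (negbTE yx).
Qed.
Section Split.
Variables (R : realType) (d : measure_display) (Omega : measurableType d)
  (P : probability Omega R).
Variable X : Omega -> seq R.
Hypothesis mX : forall s, measurable [set w | X w = s].

Lemma meas_in (U : seq (seq R)) : measurable [set w | X w \in U].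
Proof.
elim: U => [|x U IH].
  by have -> : [set w | X w \in [::]] = set0 by apply/seteqP; split => w //=.
have -> : [set w | X w \in x :: U] = [set w | X w = x] `|` [set w | X w \in U].
  apply/seteqP; split => w /=; rewrite inE.
    by case/orP => [/eqP ->|]; [left|right].
  by case=> [->|->]; rewrite ?eqxx ?orbT.
exact: measurableU.
Qed.

Lemma split_list (U : seq (seq R)) F : uniq U -> measurable F ->
  Pr P F = \sum_(s <- U) Pr P (F `&` [set w | X w = s])
           + Pr P (F `\` [set w | X w \in U]).
Proof.
elim: U F => [|x U IH] F.
  move=> _ _; rewrite big_nil add0r; congr (Pr P _).
  by apply/seteqP; split => w /=; [move=> Fw; split|case].
move=> /= /andP[xU uU] mF.
rewrite (Pr_split P mF (mX x)) (IH _ uU); last exact: measurableD.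
rewrite big_cons.
have -> : \sum_(s <- U) Pr P ((F `\` [set w | X w = x]) `&` [set w | X w = s])
   = \sum_(s <- U) Pr P (F `&` [set w | X w = s]).
  apply: eq_big_seq => s sU; congr (Pr P _).
  apply/seteqP; split => w /=; first by case=> -[].
  case=> Fw Xw; split=> //; split=> // Xx.
  by move: xU; rewrite -Xx Xw sU.
have -> : (F `\` [set w | X w = x]) `\` [set w | X w \in U] =
    F `\` [set w | X w \in x :: U].
  apply/seteqP; split => w /=.
    by case=> -[Fw nx] nU; split=> //; rewrite inE => /orP[/eqP|]//.
  by case=> Fw; rewrite inE => H; split; [split=> // e; apply: H; rewrite e eqxx|
     move=> e; apply: H; rewrite e orbT].
lra.
Qed.

End Split.
Section Comb.
Variable R : realType.

Definition succ (s : seq R) : seq (seq R) :=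
  undup (s :: flatten [seq flatten [seq [seq merge3 s i j k | k <- iota 0 (size s)]
              | j <- iota 0 (size s)] | i <- iota 0 (size s)]).

Lemma mem_succ s (i j k : nat) : (i < size s)%N -> (j < size s)%N -> (k < size s)%N ->
  merge3 s i j k \in succ s.
Proof.
move=> ii jj kk; rewrite mem_undup inE; apply/orP; right.
apply/flatten_mapP; exists i; rewrite ?mem_iota //.
apply/flatten_mapP; exists j; rewrite ?mem_iota //.
by apply/mapP; exists k; rewrite ?mem_iota.
Qed.

Lemma succ_self s : s \in succ s.
Proof. by rewrite mem_undup inE eqxx. Qed.

Lemma succ_uniq s : uniq (succ s).
Proof. exact: undup_uniq. Qed.
End Comb.
Section Comb2.
Variable R : realType.

Lemma sum_qrate (s : seq R) : \sum_(s' <- succ s) qrate s s' = qtot s.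
Proof.
have qE s' : qrate s s' = \sum_(i < size s) \sum_(j < size s) \sum_(k < size s)
   (if triple_ok s i j k && (merge3 s i j k == s') then rate3 s i j k else 0).
  by rewrite /qrate; apply: eq_bigr => i _; apply: eq_bigr => j _; rewrite big_mkcond.
rewrite (eq_bigr _ (fun s' _ => qE s')) /qtot.
rewrite exchange_big; apply: eq_bigr => i _.
rewrite exchange_big; apply: eq_bigr => j _.
rewrite exchange_big [RHS]big_mkcond; apply: eq_bigr => k _ /=.
case ok: (triple_ok s i j k) => /=.
  apply: sum_pick; first exact: succ_uniq.
  by apply: mem_succ.
by rewrite big1.
Qed.

Lemma sum_jumpP (s : seq R) : \sum_(s' <- succ s) jumpP s s' = 1.
Proof.
have [q0|q0] := eqVneq (qtot s) 0.
  transitivity (\sum_(s' <- succ s) (if s == s' then (1:R) else 0)).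
    by apply: eq_bigr => s' _; rewrite /jumpP q0 eqxx eq_sym; case: eqP.
  by apply: sum_pick; [exact: succ_uniq|exact: succ_self].
rewrite /jumpP (negbTE q0) -big_distrl /= sum_qrate divff //.
Qed.
End Comb2.
Section Merge.
Variable R : realType.

Definition rest (s : seq R) (i j k : nat) :=
  [seq s`_l | l <- iota 0 (size s) & l \notin [:: i; j; k]].

Lemma perm_rest (s : seq R) i j k : (i < j)%N -> (j < k)%N -> (k < size s)%N ->
  perm_eq s (s`_i :: s`_j :: s`_k :: rest s i j k).
Proof.
move=> ij jk ks.
have e : s = [seq s`_l | l <- iota 0 (size s)] by rewrite -/(mkseq _ _) mkseq_nth.
rewrite {1}e /rest.
have -> : [:: s`_i, s`_j, s`_k & [seq s`_l | l <- iota 0 (size s) & l \notin [:: i; j; k]]]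
   = [seq s`_l | l <- [:: i; j; k] ++ [seq l <- iota 0 (size s) | l \notin [:: i; j; k]]] by [].
apply: perm_map.
have pf : perm_eq (iota 0 (size s))
   ([seq l <- iota 0 (size s) | l \in [:: i; j; k]] ++
    [seq l <- iota 0 (size s) | l \notin [:: i; j; k]]).
  by rewrite perm_sym; apply: permEl; exact: (perm_filterC (fun l => l \in [:: i; j; k])).
apply: perm_trans pf _; apply: perm_cat => //.
apply: uniq_perm.
- by apply: filter_uniq; exact: iota_uniq.
- rewrite /= !inE negb_or !andbT; apply/andP; split; apply/negP => /eqP; lia.
move=> x; rewrite mem_filter mem_iota /= !inE.
apply/idP/idP; first by case/andP.
move=> H; rewrite H /=; move: H => /orP[/eqP->|/orP[/eqP->|/eqP->]]; lia.
Qed.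

Lemma merge_perm (s : seq R) i j k :
  perm_eq (merge3 s i j k) ((s`_i + s`_j + s`_k) :: rest s i j k).
Proof. by rewrite /merge3 /rest; apply: permEl; exact: perm_sort. Qed.

Lemma merge_sum (s : seq R) i j k : (i < j)%N -> (j < k)%N -> (k < size s)%N ->
  \sum_(x <- merge3 s i j k) x = \sum_(x <- s) x.
Proof.
move=> ij jk ks.
rewrite (perm_big _ (merge_perm s i j k)) (perm_big _ (perm_rest ij jk ks)).
by rewrite !big_cons /= !addrA.
Qed.

Lemma merge_size (s : seq R) i j k : (i < j)%N -> (j < k)%N -> (k < size s)%N ->
  size (merge3 s i j k) = (size s - 2)%N.
Proof.
move=> ij jk ks.
rewrite (perm_size (merge_perm s i j k)) (perm_size (perm_rest ij jk ks)) /=.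
lia.
Qed.

Lemma config_pos (s : seq R) l : config s -> (l < size s)%N -> 0 < s`_l.
Proof.
by case/andP=> _ /allP H ls; apply: H; exact: mem_nth.
Qed.

Lemma merge_config (s : seq R) i j k : (i < j)%N -> (j < k)%N -> (k < size s)%N ->
  config s -> config (merge3 s i j k).
Proof.
move=> ij jk ks cs; apply/andP; split.
  apply: sort_sorted => x y; exact: le_total.
rewrite (perm_all _ (merge_perm s i j k)) /=; apply/andP; split.
  have := config_pos cs ks; have := config_pos cs (ltn_trans jk ks).
  have := config_pos cs (ltn_trans ij (ltn_trans jk ks)); lra.
case/andP: cs => _; rewrite (perm_all _ (perm_rest ij jk ks)) /=.
by case/and4P.
Qed.

End Merge.
Section Qtot.
Variable R : realType.
Implicit Types f : nat -> R.

Definition Wsum f (c : R) m :=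
  \sum_(i < m) \sum_(j < m) (if (i < j)%N then f i + f j + c else 0).

Definition Tsum f m :=
  \sum_(i < m) \sum_(j < m) \sum_(k < m)
     (if (i < j)%N && (j < k)%N then f i + f j + f k + 3 else 0).

Lemma Wsum_rec f c m : Wsum f c m.+1 = Wsum f c m + \sum_(i < m) (f i + f m + c).
Proof.
rewrite /Wsum big_ord_recr /= [X in _ + X]big1; last first.
  by move=> j _; rewrite ifF //; have := ltn_ord j; lia.
rewrite addr0 -big_split /=; apply: eq_bigr => i _.
by rewrite big_ord_recr /= ltn_ord.
Qed.

Lemma sum_cst_ord (x : R) m : \sum_(i < m) x = x * m%:R.
Proof. by rewrite sumr_const card_ord mulr_natr. Qed.

Lemma Wsum_eq f c m :
  2 * Wsum f c m = 2 * (m%:R - 1) * (\sum_(i < m) f i) + c * m%:R * (m%:R - 1).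
Proof.
elim: m => [|m IH]; first by rewrite /Wsum !big_ord0; ring.
rewrite Wsum_rec mulrDr IH big_ord_recr /= !big_split /= !sum_cst_ord -natr1; ring.
Qed.
Lemma Tsum_rec f m : Tsum f m.+1 = Tsum f m + Wsum f (f m + 3) m.
Proof.
rewrite /Tsum big_ord_recr /= [X in _ + X]big1; last first.
  move=> j _; rewrite big1 // => k _; rewrite ifF //.
  by apply/negbTE/negP => /andP[a b]; have := ltn_ord j; lia.
rewrite addr0 /Wsum -big_split /=; apply: eq_bigr => i _.
rewrite big_ord_recr /= [X in _ + X]big1; last first.
  move=> k _; rewrite ifF //.
  by apply/negbTE/negP => /andP[a b]; have := ltn_ord k; lia.
rewrite addr0 -big_split /=; apply: eq_bigr => j _.
rewrite big_ord_recr /= (ltn_ord j) andbT; congr (_ + _).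
by case: ifP => _; rewrite ?addrA.
Qed.

Lemma Tsum_eq f m :
  2 * Tsum f m = (m%:R - 1) * (m%:R - 2) * (\sum_(i < m) f i + m%:R).
Proof.
elim: m => [|m IH]; first by rewrite /Tsum !big_ord0; ring.
rewrite Tsum_rec mulrDr IH Wsum_eq big_ord_recr /= -natr1; ring.
Qed.

Lemma qtot_Tsum (s : seq R) : config s -> qtot s = Tsum (fun l => s`_l) (size s).
Proof.
move=> cs; rewrite /qtot /Tsum; apply: eq_bigr => i _; apply: eq_bigr => j _.
rewrite big_mkcond; apply: eq_bigr => k _ /=.
rewrite /triple_ok; have kk := ltn_ord k; have pk := config_pos cs kk. by rewrite kk pk /= andbT.
Qed.

Lemma qtot_eq (s : seq R) : config s ->
  2 * qtot s = ((size s)%:R - 1) * ((size s)%:R - 2) * (\sum_(x <- s) x + (size s)%:R).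
Proof.
move=> cs; rewrite qtot_Tsum // Tsum_eq; congr (_ * (_ + _)).
by rewrite (big_nth 0) big_mkord.
Qed.

End Qtot.
Section Comb3.
Variable R : realType.

Lemma sum_ge0_config (s : seq R) : config s -> 0 <= \sum_(x <- s) x.
Proof.
case/andP=> _ /allP H; rewrite big_seq; apply: sumr_ge0 => x xs.
exact/ltW/H.
Qed.

Lemma qtot_gt0 (s : seq R) : config s -> (3 <= size s)%N -> 0 < qtot s.
Proof.
move=> cs s3; have e := qtot_eq cs; have g := sum_ge0_config cs.
have h3 : (3:R) <= (size s)%:R by rewrite (ler_nat R 3).
have : 0 < ((size s)%:R - 1) * ((size s)%:R - 2) * (\sum_(x <- s) x + (size s)%:R).
  apply: mulr_gt0; first (apply: mulr_gt0; lra).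
  lra.
lra.
Qed.

Lemma jumpP_merge (s s' : seq R) : qtot s != 0 -> jumpP s s' != 0 ->
  exists i j k, triple_ok s i j k /\ s' = merge3 s i j k.
Proof.
move=> q0 jn; apply/not_existsP => H; move: jn.
rewrite /jumpP (negbTE q0) /qrate big1 ?mul0r ?eqxx // => i _.
rewrite big1 // => j _; rewrite big1 // => k /andP[ok /eqP e].
by exfalso; apply: (H i); exists j, k.
Qed.

Lemma jumpP3 (s s' : seq R) : size s = 3%N -> config s -> jumpP s s' != 0 ->
  jumpP s s' = 1.
Proof.
move=> s3 cs.
have q0 : qtot s != 0 by rewrite gt_eqF // qtot_gt0 // s3.
have E : forall i j k : nat, triple_ok s i j k ->
    merge3 s i j k = merge3 s 0 1 2.
  move=> i j k /and4P[ij jk ks _]; rewrite s3 in ks.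
  have -> : i = 0%N by lia.
  have -> : j = 1%N by lia.
  by have -> : k = 2%N by lia.
rewrite /jumpP (negbTE q0).
have [b|nb] := eqVneq (merge3 s 0 1 2) s'.
  have -> : qrate s s' = qtot s.
    rewrite /qrate /qtot; apply: eq_bigr => i _; apply: eq_bigr => j _.
    apply: eq_bigl => k; case ok: (triple_ok s i j k) => //=.
    by rewrite (E _ _ _ ok) b eqxx.
  by rewrite divff.
have -> : qrate s s' = 0.
  rewrite /qrate big1 // => i _; rewrite big1 // => j _.
  rewrite big1 // => k /andP[ok /eqP e].
  by move: nb; rewrite -e (E _ _ _ ok) eqxx.
by rewrite mul0r eqxx.
Qed.

End Comb3.
Section Process.
Variables (R : realType) (d : measure_display) (Omega : measurableType d)
  (P : probability Omega R).
Variables (r : seq R) (Y : nat -> Omega -> seq R) (D : nat -> Omega -> R).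
Hypothesis HT : ternary_coalescent P r Y D.

Let mY : forall k s, measurable [set w | Y k w = s].
Proof. by case: HT. Qed.
Let mD : forall k, measurable_fun setT (D k).
Proof. by case: HT. Qed.
Let HY0 : Pr P [set w | Y 0 w = r] = 1.
Proof. by case: HT. Qed.
Let Htr : forall k (h : nat -> seq R) (s' : seq R),
    Pr P (hist Y k h `&` [set w | Y k.+1 w = s'])
    = Pr P (hist Y k h) * jumpP (h k) s'.
Proof. by case: HT. Qed.

Lemma hist0 h : hist Y 0 h = [set w | Y 0 w = h 0%N].
Proof.
apply/seteqP; split => w /=; first by apply.
by move=> H k; rewrite leqn0 => /eqP ->.
Qed.

Lemma histS k h : hist Y k.+1 h = hist Y k h `&` [set w | Y k.+1 w = h k.+1].
Proof.
apply/seteqP; split => w /=.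
  by move=> H; split; [move=> m mk; apply: H; exact: leqW|apply: H].
move=> [H1 H2] m; rewrite leq_eqVlt => /orP[/eqP->//|]; rewrite ltnS; exact: H1.
Qed.

Lemma mhist k h : measurable (hist Y k h).
Proof. exact: meas_eq_all_le. Qed.

Lemma hist_ext k h h' : (forall m, (m <= k)%N -> h m = h' m) -> hist Y k h = hist Y k h'.
Proof.
move=> e; apply/seteqP; split => w /= H m mk.
  by rewrite -e //; exact: H.
by rewrite e //; exact: H.
Qed.

Lemma hist_sub k h : hist Y k h `<=` [set w | Y k w = h k].
Proof. by move=> w /= H; apply: H. Qed.

Lemma Pr_notr : Pr P (setT `\` [set w | Y 0 w = r]) = 0.
Proof.
have := Pr_split P (@measurableT _ Omega) (mY 0 r).
by rewrite PrT setTI HY0; lra.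
Qed.

Lemma step k h F : measurable F -> F `<=` hist Y k h ->
  Pr P F = \sum_(s <- succ (h k)) Pr P (F `&` [set w | Y k.+1 w = s]).
Proof.
move=> mF FH.
rewrite (split_list P (mY k.+1) (succ_uniq (h k)) mF).
suff -> : Pr P (F `\` [set w | Y k.+1 w \in succ (h k)]) = 0 by rewrite addr0.
have mI := meas_in (mY k.+1) (succ (h k)).
have := split_list P (mY k.+1) (succ_uniq (h k)) (mhist k h).
under eq_bigr => s _ do rewrite Htr.
rewrite -big_distrr /= sum_jumpP mulr1 => e.
have z : Pr P (hist Y k h `\` [set w | Y k.+1 w \in succ (h k)]) = 0 by lra.
apply/eqP; rewrite eq_le Pr_ge0 andbT -z; apply: Pr_le.
- exact: measurableD.
- exact: measurableD (mhist k h) mI.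
- by move=> w [Fw nw]; split=> //; apply: FH.
Qed.

Fixpoint Gs k : seq (seq (seq R)) :=
  if k is k'.+1 then [seq rcons g s | g <- Gs k', s <- succ (last [::] g)]
  else [:: [:: r]].

Definition hf (g : seq (seq R)) := fun m => nth [::] g m.

Lemma Gs_size k g : g \in Gs k -> size g = k.+1.
Proof.
elim: k g => [|k IH] g /=; first by rewrite inE => /eqP ->.
by case/allpairsPdep => g' [s [g'G _ ->]]; rewrite size_rcons (IH _ g'G).
Qed.

Lemma decomp k F : measurable F ->
  Pr P F = \sum_(g <- Gs k) Pr P (F `&` hist Y k (hf g)).
Proof.
move=> mF; elim: k => [|k IH].
  rewrite /= big_seq1 hist0 /hf /=.
  rewrite (Pr_split P mF (mY 0 r)).
  suff -> : Pr P (F `\` [set w | Y 0 w = r]) = 0 by rewrite add0r.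
  apply/eqP; rewrite eq_le Pr_ge0 andbT -(Pr_notr).
  apply: Pr_le; [exact: measurableD|exact: measurableD|].
  by move=> w [_ ?].
rewrite IH /= big_allpairs_dep; apply: eq_big_seq => g gG.
have sg := Gs_size gG.
have hk : hf g k = last [::] g.
  by rewrite /hf -nth_last sg.
rewrite (@step k (hf g) (F `&` hist Y k (hf g))); last 2 first.
- exact: measurableI (mhist _ _).
- by apply: subIsetr.
rewrite hk; apply: eq_bigr => s _; congr (Pr P _).
have e1 : hist Y k (hf g) = hist Y k (hf (rcons g s)).
  by apply: hist_ext => m mk; rewrite /hf nth_rcons sg ltnS mk.
have e2 : hf (rcons g s) k.+1 = s by rewrite /hf nth_rcons sg ltnn eqxx.
by rewrite histS -setIA e1 e2.
Qed.

Lemma markov_h l s s' h :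
  Pr P (([set w | Y l w = s] `&` [set w | Y l.+1 w = s']) `&` hist Y l h)
  = Pr P ([set w | Y l w = s] `&` hist Y l h) * jumpP s s'.
Proof.
have [e|ne] := eqVneq (h l) s.
  have E : [set w | Y l w = s] `&` hist Y l h = hist Y l h.
    by apply/setIidr; move=> w /hist_sub /=; rewrite e.
  rewrite E -[in RHS]e -Htr; congr (Pr P _).
  apply/seteqP; split => w /=; first by case=> -[_ a] b.
  by case=> b a; split=> //; split=> //; rewrite -e; exact: (hist_sub b).
have E : [set w | Y l w = s] `&` hist Y l h = set0.
  apply/seteqP; split => w //= [Yw /hist_sub /=]; rewrite Yw => hs.
  by move: ne; rewrite hs eqxx.
rewrite E Pr0 mul0r -(Pr0 P); congr (Pr P _).
by rewrite -setIA [_ `&` hist _ _ _]setIC setIA E set0I.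
Qed.

Lemma markov l s s' :
  Pr P ([set w | Y l w = s] `&` [set w | Y l.+1 w = s'])
  = Pr P [set w | Y l w = s] * jumpP s s'.
Proof.
rewrite (decomp l (measurableI _ _ (mY l s) (mY l.+1 s'))).
rewrite (decomp l (mY l s)) big_distrl /=.
by apply: eq_bigr => g _; apply: markov_h.
Qed.

Lemma reach k h : Pr P (hist Y k h) != 0 ->
  h 0%N = r /\ forall m, (m < k)%N -> jumpP (h m) (h m.+1) != 0.
Proof.
elim: k => [|k IH].
  rewrite hist0 => nz; split=> //.
  apply/eqP; apply: contraNT nz => hr; apply/eqP.
  apply/eqP; rewrite eq_le Pr_ge0 andbT -(Pr_notr).
  apply: Pr_le; [exact: mY|exact: measurableD|].
  by move=> w /= e; split=> // e'; move: hr; rewrite -e -e' eqxx.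
rewrite histS Htr mulf_eq0 negb_or => /andP[nz jn].
have [h0 Hm] := IH nz; split=> // m; rewrite ltnS leq_eqVlt => /orP[/eqP->//|].
exact: Hm.
Qed.

End Process.
Section Process2.
Variables (R : realType) (d : measure_display) (Omega : measurableType d)
  (P : probability Omega R).
Variables (n : nat) (r : seq R) (Y : nat -> Omega -> seq R) (D : nat -> Omega -> R).
Hypothesis cr : config r.
Hypothesis sr : size r = (2 * n).+1.
Hypothesis HT : ternary_coalescent P r Y D.

Let mY : forall k s, measurable [set w | Y k w = s].
Proof. by case: HT. Qed.
Let mD : forall k, measurable_fun setT (D k).
Proof. by case: HT. Qed.
Let Htr : forall k (h : nat -> seq R) (s' : seq R),
    Pr P (hist Y k h `&` [set w | Y k.+1 w = s'])
    = Pr P (hist Y k h) * jumpP (h k) s'.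
Proof. by case: HT. Qed.
Let Hhold : forall k (h : nat -> seq R) (B : nat -> set R),
    (forall m, (m <= k)%N -> 0 < qtot (h m)) ->
    (forall m, measurable (B m)) ->
    Pr P (hist Y k h `&` [set w | forall m, (m <= k)%N -> B m (D m w)])
    = Pr P (hist Y k h) *
      \prod_(m < k.+1) fine (exponential_prob (qtot (h m)) (B m)).
Proof. by case: HT. Qed.

Lemma good k (h : nat -> seq R) : (k <= n)%N -> h 0%N = r ->
  (forall m, (m < k)%N -> jumpP (h m) (h m.+1) != 0) ->
  forall m, (m <= k)%N -> [/\ config (h m), size (h m) = (size r - 2 * m)%N &
                            \sum_(x <- h m) x = \sum_(x <- r) x].
Proof.
move=> kn h0 J; elim=> [|m IH] mk.
  by rewrite h0 muln0 subn0.
have [c s e] := IH (ltnW mk).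
have s3 : (3 <= size (h m))%N by rewrite s sr; lia.
have q0 : qtot (h m) != 0 by rewrite gt_eqF // qtot_gt0.
have [i [j [k' [ok ->]]]] := jumpP_merge q0 (J m mk).
case/and4P: ok => ij jk ks _.
split.
- exact: merge_config.
- by rewrite merge_size // s; lia.
- by rewrite merge_sum.
Qed.

Lemma qtot_alpha l (s : seq R) (M : R) : (l < n)%N -> config s ->
  size s = (size r - 2 * l)%N -> \sum_(x <- s) x = M ->
  qtot s = alpha M (size r) l.+1.
Proof.
move=> ln cs hs hM.
have e := qtot_eq cs; rewrite hs hM in e.
have two : ((size r - 2 * l)%N%:R : R) = (size r)%:R - 2 * l%:R.
  by rewrite natrB ?natrM //; lia.
rewrite two in e.
have -> : qtot s = (2 * qtot s) / 2 by field.
by rewrite e /alpha -natr1; field.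
Qed.

Definition cprod K (B : nat -> set R) :=
  \prod_(m < K.+1)
     fine (exponential_prob (alpha (\sum_(x <- r) x) (size r) m.+1) (B m)).

Lemma rect_hist K (B : nat -> set R) h : (K < n)%N -> (forall m, measurable (B m)) ->
  Pr P ([set w | forall m, (m <= K)%N -> B m (D m w)] `&` hist Y K h)
  = Pr P (hist Y K h) * cprod K B.
Proof.
move=> Kn mB.
set Rc := [set w | forall m, (m <= K)%N -> B m (D m w)].
have mR : measurable Rc by apply: meas_all_le => // k _; exact: mD.
have [z|nz] := eqVneq (Pr P (hist Y K h)) 0.
  rewrite z mul0r; apply/eqP; rewrite eq_le Pr_ge0 andbT -z.
  have mH := mhist HT K h.
  by apply: Pr_le; [exact: measurableI|exact: mH|exact: subIsetr].
have [h0 J] := reach HT nz.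
have G := good (ltnW Kn) h0 J.
rewrite setIC Hhold //.
  congr (_ * _); apply: eq_bigr => m _.
  have mK : (m <= K)%N by rewrite -ltnS.
  have [c1 s1 e1] := G m mK.
  by rewrite (qtot_alpha _ c1 s1 e1) //; apply: leq_ltn_trans Kn.
move=> m mK; have [c1 s1 _] := G m mK; apply: qtot_gt0 => //.
by rewrite s1 sr; lia.
Qed.

Lemma PrRect K (B : nat -> set R) : (K < n)%N -> (forall m, measurable (B m)) ->
  Pr P [set w | forall m, (m <= K)%N -> B m (D m w)] = cprod K B.
Proof.
move=> Kn mB.
set Rc := [set w | forall m, (m <= K)%N -> B m (D m w)].
have mR : measurable Rc by apply: meas_all_le => // k _; exact: mD.
have S1 : \sum_(g <- Gs r K) Pr P (hist Y K (hf g)) = 1.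
  rewrite -(PrT P) (decomp HT K measurableT); apply: eq_bigr => g _.
  by rewrite setTI.
rewrite (decomp HT K mR) (eq_bigr _ (fun g _ => rect_hist (hf g) Kn mB)).
by rewrite -big_distrl /= S1 mul1r.
Qed.

Lemma part1 (B : nat -> set R) : (forall k, measurable (B k)) ->
  Pr P [set w | forall k, (k < n)%N -> B k (D k w)]
  = \prod_(k < n) fine (exponential_prob (alpha (\sum_(x <- r) x) (size r) k.+1) (B k)).
Proof.
move=> mB; case En: n => [|K].
  have -> : [set w | forall k, (k < 0)%N -> B k (D k w)] = setT.
    by apply/seteqP; split => w //= _ k.
  by rewrite big_ord0 PrT.
have := @PrRect K B; rewrite En => /(_ (ltnSn K) mB) ->; done.
Qed.

Lemma part3 (l : nat) (s : seq R) (i j k : nat) : (l < n)%N ->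
  config s -> size s = (size r - 2 * l)%N -> \sum_(x <- s) x = \sum_(x <- r) x ->
  0 < Pr P [set w | Y l w = s] ->
  Pr P ([set w | Y l w = s] `&` [set w | Y l.+1 w = merge3 s i j k])
    / Pr P [set w | Y l w = s]
  = qrate s (merge3 s i j k) / alpha (\sum_(x <- r) x) (size r) l.+1.
Proof.
move=> ln cs ss sM pos.
rewrite (markov HT) mulrC mulrA mulVf ?mul1r ?gt_eqF //.
rewrite /jumpP -(qtot_alpha ln cs ss sM) ifF //.
apply/negbTE; rewrite gt_eqF // qtot_gt0 // ss sr; lia.
Qed.
Lemma meas_sum_fun (d' : measure_display) (T : measurableType d')
  (f : nat -> T -> R) k :
  (forall m, (m < k)%N -> measurable_fun setT (f m)) ->
  measurable_fun setT (fun w => \sum_(m < k) f m w).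
Proof.
elim: k => [|k IH] mf.
  have -> : (fun w => \sum_(m < 0) f m w) = cst 0.
    by apply/funext => w; rewrite big_ord0.
  exact: measurable_cst.
have -> : (fun w => \sum_(m < k.+1) f m w) = (fun w => \sum_(m < k) f m w) \+ f k.
  by apply/funext => w; rewrite big_ord_recr.
apply: measurable_funD; first by apply: IH => m mk; apply: mf; exact: ltnW.
exact: mf.
Qed.

Lemma part2 (B : nat -> set R) (h : nat -> seq R) :
  (forall k, measurable (B k)) ->
  Pr P ([set w | forall k, (k <= n)%N -> B k (jump_time D k w)] `&` hist Y n h)
  = Pr P [set w | forall k, (k <= n)%N -> B k (jump_time D k w)]
    * Pr P (hist Y n h).
Proof.
move=> mB.
set E := [set w | forall k, (k <= n)%N -> B k (jump_time D k w)].
have mE : measurable E.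
  apply: meas_all_le => // k _; rewrite /jump_time.
  by apply: meas_sum_fun => m _; exact: mD.
have mHn := mhist HT n h.
case En: n => [|K].
  have [b|nb] := pselect (B 0%N 0).
    have -> : E = setT.
      apply/seteqP; split => w //= _ k; rewrite En leqn0 => /eqP ->.
      by rewrite /jump_time big_ord0.
    by rewrite setTI PrT mul1r.
  have -> : E = set0.
    apply/seteqP; split => w //= H; apply: nb.
    by have := H 0%N; rewrite En /jump_time big_ord0; apply.
  by rewrite set0I Pr0 mul0r.
rewrite -En.
have [z|nz] := eqVneq (Pr P (hist Y n h)) 0.
  rewrite z mulr0; apply/eqP; rewrite eq_le Pr_ge0 andbT -z.
  by apply: Pr_le; [exact: measurableI|exact: mHn|exact: subIsetr].
have eH : hist Y n h = hist Y K h `&` [set w | Y K.+1 w = h K.+1] by rewrite En histS.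
set HK := hist Y K h.
have mHK : measurable HK := mhist HT K h.
have e2 : Pr P (hist Y n h) = Pr P HK * jumpP (h K) (h K.+1) by rewrite eH Htr.
have nz' : Pr P HK * jumpP (h K) (h K.+1) != 0 by rewrite -e2.
move: nz'; rewrite mulf_eq0 negb_or => /andP[nzK jn].
have [h0 J] := reach HT nzK.
have Kn : (K <= n)%N by rewrite En.
have KN : (K < n)%N by rewrite En.
have [cK sK _] := good Kn h0 J (leqnn K).
have s3 : size (h K) = 3%N by rewrite sK sr; lia.
have j1 := jumpP3 s3 cK jn.
have Claim1 : forall C, measurable C -> Pr P (C `&` hist Y n h) = Pr P (C `&` HK).
  move=> C mC; rewrite eH setIA.
  have mCK : measurable (C `&` HK) by exact: measurableI.
  rewrite [RHS](Pr_split P mCK (mY K.+1 (h K.+1))).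
  suff -> : Pr P ((C `&` HK) `\` [set w | Y K.+1 w = h K.+1]) = 0 by rewrite add0r.
  have z0 : Pr P (HK `\` [set w | Y K.+1 w = h K.+1]) = 0.
    by have := Pr_split P mHK (mY K.+1 (h K.+1)); rewrite Htr j1 mulr1; lra.
  apply/eqP; rewrite eq_le Pr_ge0 andbT -z0; apply: Pr_le.
  - exact: measurableD.
  - exact: measurableD.
  - by move=> w [[_ a] b].
have HnK : Pr P (hist Y n h) = Pr P HK.
  by have := Claim1 setT measurableT; rewrite !setTI.
rewrite Claim1 // HnK.
pose G := [set A : set Omega | exists B' : nat -> set R, (forall m, measurable (B' m)) /\ A = [set w | forall m, (m <= K)%N -> B' m (D m w)]].
have Gm : G `<=` measurable.
  by move=> A [B' [mB' ->]]; apply: meas_all_le => // k _; exact: mD.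
have Gg : forall i : nat, G setT.
  move=> _; exists (fun _ => setT); split=> //.
  by apply/seteqP; split => w //= _.
have gcov : \bigcup_k (fun _ : nat => (setT : set Omega)) k = setT.
  by apply/seteqP; split=> // w _; exists 0%N.
have setIG : setI_closed G.
  move=> A1 A2 [B1 [mB1 ->]] [B2 [mB2 ->]]; exists (fun m => B1 m `&` B2 m); split.
    by move=> m; exact: measurableI.
  apply/seteqP; split => w /=.
    by move=> [H1 H2] m mK; split; [apply: H1|apply: H2].
  by move=> H; split=> m mK; have [] := H m mK.
have m1m2 : forall A, G A -> mrestr P mHK A = mscale (NngNum (Pr_ge0 P HK)) P A.
  move=> A [B' [mB' ->]].
  have mR : measurable [set w | forall m, (m <= K)%N -> B' m (D m w)].
    by apply: meas_all_le => // k _; exact: mD.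
  rewrite /mrestr /mscale /= (PrE P (measurableI _ _ mR mHK)) (PrE P mR).
  by rewrite rect_hist // PrRect // EFinM.
have m1goo : forall k : nat, (mrestr P mHK (setT : set Omega) < +oo)%E.
  by move=> _; rewrite /mrestr setTI (PrE P mHK) ltry.
have sGE : (G.-sigma.-measurable E).
  apply: (@meas_all_le R _ (g_sigma_algebraType G)) => // k kn.
  rewrite /jump_time; apply: meas_sum_fun => m mk.
  move=> _ Bm mBm; apply: sub_sigma_algebra.
  exists (fun m' => if m' == m then Bm else setT); split.
    by move=> m'; case: ifP.
  have mK : (m <= K)%N by rewrite -ltnS; apply: leq_trans mk _; rewrite -En.
  apply/seteqP; split => w /=.
    by move=> [_ H] m' _; case: eqP => [->|].
  by move=> H; split=> //; have := H m mK; rewrite eqxx.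
have := g_sigma_algebra_measure_unique G Gm (fun _ => setT) Gg gcov
  (mrestr P mHK) (mscale (NngNum (Pr_ge0 P HK)) P) setIG m1m2 m1goo E sGE.
move=> X.
have X' : P (E `&` HK) = ((Pr P HK)%:E * P E)%E := X.
move: X'; rewrite (PrE P (measurableI _ _ mE mHK)) (PrE P mE) -EFinM.
by case=> ->; rewrite mulrC.
Qed.

End Process2.

Theorem proposition2p2 (R : realType) (d : measure_display)
  (Omega : measurableType d) (P : probability Omega R)
  (n : nat) (r : seq R) (Y : nat -> Omega -> seq R) (D : nat -> Omega -> R) :
  config r -> size r = (2 * n).+1 ->
  ternary_coalescent P r Y D ->
  let N := size r in
  let M := \sum_(x <- r) x in
  (* (i) Delta_1, ..., Delta_n independent, Delta_k ~ Exp(alpha k) *)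
  (forall B : nat -> set R, (forall k, measurable (B k)) ->
     Pr P [set w | forall k, (k < n)%N -> B k (D k w)]
     = \prod_(k < n) fine (exponential_prob (alpha M N k.+1) (B k)))
  /\
  (* (i) (T_k)_{0<=k<=n} and (X'_k)_{0<=k<=n} are independent *)
  (forall (B : nat -> set R) (h : nat -> seq R),
     (forall k, measurable (B k)) ->
     Pr P ([set w | forall k, (k <= n)%N -> B k (jump_time D k w)]
             `&` hist Y n h)
     = Pr P [set w | forall k, (k <= n)%N -> B k (jump_time D k w)]
       * Pr P (hist Y n h))
  /\
  (* (ii) (X'_k)_{0<=k<=n} is a Markov chain ... *)
  (forall (l : nat) (h : nat -> seq R) (s' : seq R), (l < n)%N ->
     0 < Pr P (hist Y l h) ->
     Pr P (hist Y l h `&` [set w | Y l.+1 w = s'])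
       * Pr P [set w | Y l w = h l]
     = Pr P (hist Y l h)
       * Pr P ([set w | Y l w = h l] `&` [set w | Y l.+1 w = s']))
  /\
  (* (ii) ... with the stated transition probabilities *)
  (forall (l : nat) (s : seq R) (i j k : nat), (l < n)%N ->
     config s -> size s = (N - 2 * l)%N -> \sum_(x <- s) x = M ->
     0 < Pr P [set w | Y l w = s] ->
     (i < j)%N -> (j < k)%N -> (k < size s)%N ->
     Pr P ([set w | Y l w = s] `&` [set w | Y l.+1 w = merge3 s i j k])
     / Pr P [set w | Y l w = s]
     = qrate s (merge3 s i j k) / alpha M N l.+1).
Proof.
move=> cr sr HT N M; split; [|split; [|split]].
- by move=> B mB; apply: (part1 cr sr HT).
- by move=> B h mB; apply: (part2 cr sr HT).
- move=> l h s' ln pos.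
  have Htr := HT; case: Htr => _ _ _ Htr _.
  by rewrite Htr (markov HT); ring.
- move=> l s i j k ln cs ss sM pos ij jk ks.
  exact: (part3 cr sr HT).
Qed.
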